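(* Let $G$ be a graph with $m\ge1$ edges, let $k\ge1$ and $0\le p\le m$ be integers, $\ell=m-p$, and $\eta=2^k(\ell+2)$. Let $E$ be the classification instance $E(G,\eta)$ described in the context. Then $G$ has a set $U\subseteq V(G)$ with $|U|\le k$ that is incident to at least $p$ edges if and only if there is a decision tree $T$ with $dep(T)\le k$ and $|O(T,E)|\le \ell\eta$.
   Context: Fix an ordering $e_1,\dots,e_m$ of $E(G)$. For a positive integer $\eta$, $E(G,\eta)$ has features $V(G)\cup\{d_0\}$ and, for each $r\in[\eta]$ and $i\in[m]$: a negative example with $d_0=2m(r-1)+2i-1$ and, for each $v\in V(G)$, value $1$ if $v$ is an endpoint of $e_i$ and $0$ otherwise; and a positive example with $d_0=2m(r-1)+2i$ and value $0$ on every vertex feature. A decision tree (DT) is a rooted tree whose test nodes $v$ carry a feature $f(v)$ and integer threshold $\lambda(v)$ (examples with $e(f(v))\le\lambda(v)$ go left, others right) and whose leaves are labeled positive or negative. $dep(T)$ is the maximum number of test nodes on a root-to-leaf path. An example is an outlier for $T$ if it reaches a leaf with the opposite label; $O(T,E)$ is the set of outliers. *)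

(* Defs.v *)
From mathcomp Require Import all_boot all_order all_algebra.
Set Implicit Arguments. Unset Strict Implicit. Unset Printing Implicit Defensive.
Import Order.TTheory GRing.Theory Num.Theory.

(* A simple graph on the finite vertex type V with m edges given in a fixed
   order e_1,...,e_m: edge i is [edges i], a 2-element vertex set, and
   distinct indices give distinct edges. *)
Definition simple_graph (V : finType) (m : nat) (edges : 'I_m -> {set V}) :=
  (forall i, #|edges i| = 2) /\ injective edges.

(* Features: [Some v] for the vertex feature v, [None] for d_0. *)
Definition feature (V : finType) := option V.

(* An example: value of each feature, and label (true = positive). *)
Definition example (V : finType) := ((feature V -> int) * bool)%type.

Inductive DT (F : Type) :=
| Leaf of bool
| Node of F & int & DT F & DT F.
Arguments Leaf {F}.

Fixpoint dep F (T : DT F) : nat :=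
  match T with
  | Leaf _ => 0
  | Node _ _ l r => (maxn (dep l) (dep r)).+1
  end.

Fixpoint classify F (T : DT F) (x : F -> int) : bool :=
  match T with
  | Leaf b => b
  | Node f t l r => if (x f <= t)%R then classify l x else classify r x
  end.

Definition is_outlier F (T : DT F) (ex : ((F -> int) * bool)%type) : bool :=
  classify T ex.1 != ex.2.

(* |O(T,E)| : number of examples of E (listed as a sequence, all distinct
   here since their d_0 values are distinct) that are outliers. *)
Definition num_outliers F (T : DT F) (E : seq ((F -> int) * bool)) : nat :=
  count (is_outlier T) E.

(* The instance E(G, eta); r ranges over 1..eta (as r.+1 with r : 'I_eta),
   i over 1..m (as i.+1 with i : 'I_m). *)
Definition neg_ex (V : finType) (m : nat) (edges : 'I_m -> {set V})
  (r : nat) (i : 'I_m) : example V :=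
  (fun f => match f with
            | None => Posz (2 * m * (r.+1 - 1) + 2 * i.+1 - 1)%N
            | Some v => if v \in edges i then 1%Z else 0%Z
            end, false).

Definition pos_ex (V : finType) (m : nat) (r : nat) (i : 'I_m) : example V :=
  (fun f => match f with
            | None => Posz (2 * m * (r.+1 - 1) + 2 * i.+1)%N
            | Some _ => 0%Z
            end, true).

Definition instance_E (V : finType) (m : nat) (edges : 'I_m -> {set V})
  (eta : nat) : seq (example V) :=
  flatten [seq [:: neg_ex edges r i; pos_ex V r i]
          | r <- iota 0 eta, i <- enum 'I_m].

Definition num_incident (V : finType) (m : nat) (edges : 'I_m -> {set V})
  (U : {set V}) : nat :=
  #|[set i : 'I_m | edges i :&: U != set0]|.

(* Main.v *)
Require Import Defs.
From mathcomp Require Import all_boot all_order all_algebra.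
From mathcomp Require Import zify.
Set Implicit Arguments. Unset Strict Implicit. Unset Printing Implicit Defensive.
Import Order.TTheory GRing.Theory Num.Theory.

Fixpoint ths (V : finType) (T : DT (feature V)) : seq int :=
  match T with
  | Leaf _ => [::]
  | Node None t l r => t :: (ths l ++ ths r)
  | Node (Some _) _ l r => ths l ++ ths r
  end.

Fixpoint ps (V : finType) (T : DT (feature V)) (x : feature V -> int) : {set V} :=
  match T with
  | Leaf _ => set0
  | Node f t l r =>
    let rest := if (x f <= t)%R then ps l x else ps r x in
    match f with Some v => v |: rest | None => rest end
  end.

Lemma ps_card (V : finType) (T : DT (feature V)) x : (#|ps T x| <= dep T)%N.
Proof.
elim: T => [b|f t l IHl r IHr] /=; first by rewrite cards0.
have H : (#|if (x f <= t)%R then ps l x else ps r x| <= maxn (dep l) (dep r))%N.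
  case: ifP => _; [apply: leq_trans IHl _; exact: leq_maxl| apply: leq_trans IHr _; exact: leq_maxr].
case: f H => [v|] H; last by apply: leq_trans H _.
rewrite cardsU1; lia.
Qed.

Lemma ths_size (V : finType) (T : DT (feature V)) : (size (ths T) < 2 ^ dep T)%N.
Proof.
elim: T => [b|f t l IHl r IHr] //=.
have Hl : (2 ^ dep l <= 2 ^ maxn (dep l) (dep r))%N by rewrite leq_pexp2l // leq_maxl.
have Hr : (2 ^ dep r <= 2 ^ maxn (dep l) (dep r))%N by rewrite leq_pexp2l // leq_maxr.
rewrite expnS; case: f => [v|] /=; rewrite size_cat; lia.
Qed.

Lemma agree (V : finType) (T : DT (feature V)) (x y : feature V -> int) :
  (forall lam, lam \in ths T -> (x None <= lam)%R = (y None <= lam)%R) ->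
  (forall v, v \in ps T x -> x (Some v) = y (Some v)) ->
  classify T y = classify T x.
Proof.
elim: T => [b|f t l IHl r IHr] //=.
case: f => [v|] Hth Hps /=.
  have -> : y (Some v) = x (Some v) by rewrite (Hps v) // setU11.
  case: ifP => Hc.
    apply: IHl => [lam Hl|w Hw]; [apply: Hth; by rewrite mem_cat Hl|apply: Hps; by rewrite Hc setU1r].
  apply: IHr => [lam Hl|w Hw]; [apply: Hth; by rewrite mem_cat Hl orbT|apply: Hps; by rewrite Hc setU1r].
rewrite -(Hth t) ?mem_head //.
case: ifP => Hc.
  apply: IHl => [lam Hl|w Hw]; [apply: Hth; by rewrite inE mem_cat Hl orbT|apply: Hps; by rewrite Hc].
apply: IHr => [lam Hl|w Hw]; [apply: Hth; by rewrite inE mem_cat Hl !orbT|apply: Hps; by rewrite Hc].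
Qed.
Definition cuts (m r : nat) (lam : int) : bool :=
  ((Posz (2 * m * r + 1) <= lam)%R && (lam < Posz (2 * m * r + 2 * m))%R).

Lemma cuts_cmp m r lam d c :
  ~~ cuts m r lam -> (2 * m * r + 1 <= d <= 2 * m * r + 2 * m)%N ->
  (2 * m * r + 1 <= c <= 2 * m * r + 2 * m)%N ->
  (Posz d <= lam)%R = (Posz c <= lam)%R.
Proof.
case: lam => [n|n] //; rewrite /cuts !lez_nat ltz_nat => H1 H2 H3.
apply/idP/idP => H; lia.
Qed.

Lemma cuts_uniq m r1 r2 lam : cuts m r1 lam -> cuts m r2 lam -> r1 = r2.
Proof.
case: lam => [n|n] //; rewrite /cuts !lez_nat !ltz_nat => /andP[a b] /andP[c d].
case: (ltngtP r1 r2) => // H.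
  have : (2 * m * r1 + 2 * m <= 2 * m * r2)%N by rewrite -mulnSr leq_mul2l H orbT.
  lia.
have : (2 * m * r2 + 2 * m <= 2 * m * r1)%N by rewrite -mulnSr leq_mul2l H orbT.
lia.
Qed.



Lemma count_le1 (s : seq nat) (P : pred nat) :
  uniq s -> (forall a b, P a -> P b -> a = b) -> (count P s <= 1)%N.
Proof.
elim: s => //= x s IH /andP[xs us] HP.
case Px: (P x) => /=; last exact: IH.
have : (count P s <= count (pred1 x) s)%N.
  apply: sub_count => y Py /=; apply/eqP; exact: HP.
rewrite (count_uniq_mem x us) (negbTE xs); lia.
Qed.

Lemma count_or (T : Type) (a b : pred T) s :
  (count (fun x => a x || b x) s <= count a s + count b s)%N.
Proof. elim: s => //= x s IH; case: (a x); case: (b x) => /=; lia. Qed.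

Lemma count_cut m (s : seq nat) (ths : seq int) : uniq s ->
  (count (fun r => has (cuts m r) ths) s <= size ths)%N.
Proof.
move=> us; elim: ths => [|lam ths IH] /=; first by rewrite count_pred0.
apply: leq_trans (count_or _ _ _) _.
have := count_le1 (P := fun r => cuts m r lam) us (fun a b => @cuts_uniq m a b lam).
lia.
Qed.

Lemma sum_count (T : Type) (a : pred T) s : \sum_(x <- s) (a x : nat) = count a s.
Proof. by elim: s => [|x s IH]; rewrite ?big_nil ?big_cons ?IH. Qed.

Lemma sum_le (T : Type) (f : T -> nat) c s : (forall x, f x <= c)%N ->
  (\sum_(x <- s) f x <= size s * c)%N.
Proof. move=> H; elim: s => [|x s IH]; rewrite ?big_nil ?big_cons //=. have := H x; lia. Qed.

Lemma sum_ge (T : Type) (f : T -> nat) (P : pred T) c s : (forall x, P x -> c <= f x)%N ->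
  (c * count P s <= \sum_(x <- s) f x)%N.
Proof. move=> H; elim: s => [|x s IH]; rewrite ?big_nil ?big_cons /= ?muln0 //.
case Px: (P x); last by lia. have := H x Px; lia. Qed.

Lemma count_flat2 (S T U : Type) (a : pred U) (F : S -> T -> seq U) s t :
  count a (flatten [seq F x y | x <- s, y <- t]) = \sum_(x <- s) \sum_(y <- t) count a (F x y).
Proof.
elim: s => [|x s IH]; rewrite ?big_nil ?big_cons // allpairs_cons flatten_cat count_cat IH.
congr (_ + _); clear IH; elim: t => [|y t IHt]; rewrite ?big_nil ?big_cons //= count_cat IHt; congr (_ + _); exact: eq_bigr.
Qed.

Lemma cnt (T : finType) (P : pred T) : count P (enum T) = #|[set i | P i]|.
Proof. rewrite cardsE cardE /enum_mem size_filter count_filter. apply: eq_count => x /=. by rewrite andbT. Qed.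

Definition chain (V : finType) (s : seq V) : DT (feature V) :=
  foldr (fun v T => Node (Some v) 0%R T (Leaf false)) (Leaf true) s.

Lemma chain_dep (V : finType) (s : seq V) : dep (chain s) = size s.
Proof. by elim: s => //= v s ->; rewrite maxn0. Qed.

Lemma chain_classify (V : finType) (s : seq V) x :
  classify (chain s) x = all (fun v => (x (Some v) <= 0)%R) s.
Proof. by elim: s => //= v s <-; case: ifP. Qed.

Lemma compl_inc (V : finType) (m : nat) (edges : 'I_m -> {set V}) U :
  (#|[set i | edges i :&: U == set0]| + num_incident edges U)%N = m.
Proof.
rewrite /num_incident addnC -[RHS](card_ord m) -(cardsC [set i | edges i :&: U != set0]).
congr (_ + _); apply: eq_card => i; by rewrite !inE negbK.
Qed.

Lemma all_disj (V : finType) (m : nat) (edges : 'I_m -> {set V}) (U : {set V}) i :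
  all (fun v => ((if v \in edges i then 1 else 0) <= 0 :> int)%R) (enum U) = (edges i :&: U == set0).
Proof.
apply/allP/eqP => [H|H v].
  apply/setP => v; rewrite !inE; apply/negP => /andP[ve vU].
  by have := H v; rewrite mem_enum ve => /(_ vU).
rewrite mem_enum => vU; case: ifP => // ve.
have Hv : v \in edges i :&: U by rewrite inE ve vU.
by rewrite H inE in Hv.
Qed.

Lemma all_true (T : Type) (s : seq T) : all (fun _ => (0 <= 0 :> int)%R) s = true.
Proof. by elim: s. Qed.

Lemma num_out_dec (V : finType) (m : nat) (edges : 'I_m -> {set V}) T eta :
  num_outliers T (instance_E edges eta) =
  \sum_(r <- iota 0 eta) \sum_(i <- enum 'I_m)
     count (is_outlier T) [:: neg_ex edges r i; pos_ex V r i].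
Proof. by rewrite /num_outliers /instance_E count_flat2. Qed.

Theorem lemma5 (V : finType) (m : nat) (edges : 'I_m -> {set V})
  (HG : simple_graph edges) (Hm : (1 <= m)%N) (k p : nat)
  (Hk : (1 <= k)%N) (Hp : (p <= m)%N) :
  let l := (m - p)%N in
  let eta := (2 ^ k * (l + 2))%N in
  (exists U : {set V}, (#|U| <= k)%N /\ (p <= num_incident edges U)%N) <->
  (exists T : DT (feature V),
      (dep T <= k)%N /\ (num_outliers T (instance_E edges eta) <= l * eta)%N).
Proof.
move=> l eta; split.
  case=> U [HU HpU]; exists (chain (enum U)); split.
    by rewrite chain_dep -cardE.
  rewrite num_out_dec mulnC.
  apply: (leq_trans (sum_le (c:=l) _ _)); last by rewrite size_iota.
  move=> r.
  under eq_bigr => i _ do rewrite /= /is_outlier /= !chain_classify all_disj all_true /= eqbF_neg negbK !addn0.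
  rewrite (sum_count (fun i => edges i :&: U == set0)) cnt.
  have := compl_inc edges U; lia.
case=> T [HdT HoT].
case: (boolP [exists U : {set V}, (#|U| <= k) && (p <= num_incident edges U)]) =>
  [/existsP[U /andP[a b]]|Hno]; first by exists U.
exfalso.
have Hno' : forall U : {set V}, (#|U| <= k)%N -> (num_incident edges U < p)%N.
  move=> U HU; rewrite ltnNge; apply/negP => H; move/negP: Hno; apply.
  by apply/existsP; exists U; rewrite HU H.
have Hp1 : (1 <= p)%N by have := Hno' set0; rewrite cards0 => /(_ isT); lia.
have Hblock : forall r, all (fun lam => ~~ cuts m r lam) (ths T) ->
   (l.+1 <= \sum_(i <- enum 'I_m) count (is_outlier T) [:: neg_ex edges r i; pos_ex V r i])%N.
  move=> r Hunc.
  pose x0 : feature V -> int := fun f => match f with None => Posz (2 * m * r+1) | Some _ => 0%R end.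
  pose U := ps T x0.
  have HU : (#|U| <= k)%N by apply: leq_trans (ps_card T x0) HdT.
  have HinU := Hno' U HU.
  have Hth : forall d, (2 * m * r+1 <= d <= 2 * m * r+2 * m)%N -> forall lam, lam \in ths T ->
       (x0 None <= lam)%R = (Posz d <= lam)%R.
    move=> d Hd lam Hl /=; apply: (cuts_cmp (m:=m) (r:=r)); [by move/allP: Hunc => /(_ lam Hl) | lia | exact Hd].
  have Hpos : forall i : 'I_m, classify T (pos_ex V r i).1 = classify T x0.
    move=> i; apply: agree => [lam Hl|v _] //=.
    rewrite (Hth (2 * m * (r.+1-1) + 2 * i.+1)) //; rewrite subSS subn0; have := ltn_ord i; lia.
  have Hneg : forall i : 'I_m, edges i :&: U == set0 -> classify T (neg_ex edges r i).1 = classify T x0.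
    move=> i Hi; apply: agree => [lam Hl|v vU] /=.
      rewrite (Hth (2 * m * (r.+1-1) + 2 * i.+1 - 1)) //; rewrite subSS subn0; have := ltn_ord i; lia.
    case: ifP => // ve.
    have Hv : v \in edges i :&: U by rewrite inE ve vU.
    by rewrite (eqP Hi) inE in Hv.
  case Hb: (classify T x0).
    apply: (@leq_trans (\sum_(i <- enum 'I_m) ((edges i :&: U == set0) : nat))).
      rewrite (sum_count (fun i => edges i :&: U == set0)) cnt.
      have := compl_inc edges U; lia.
    apply: leq_sum => i _; rewrite /= /is_outlier /=.
    case Hi: (edges i :&: U == set0) => //; by rewrite (Hneg i Hi) Hb.
  apply: (@leq_trans (\sum_(i <- enum 'I_m) 1)).
    rewrite sum1_size size_enum_ord; lia.
  apply: leq_sum => i _; rewrite /= /is_outlier /= (Hpos i) Hb /=.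
  by case: (_ != false).
move: HoT; rewrite num_out_dec => HoT.
have Hc := @count_cut m (iota 0 eta) (ths T) (iota_uniq 0 eta).
have Hs := ths_size T.
have H2 : (2 ^ dep T <= 2 ^ k)%N by rewrite leq_pexp2l.
have Hcnt := count_predC (fun r => has (cuts m r) (ths T)) (iota 0 eta).
have Hge : (l.+1 * count (predC (fun r => has (cuts m r) (ths T))) (iota 0 eta) <=
  \sum_(r <- iota 0 eta) \sum_(i <- enum 'I_m) count (is_outlier T) [:: neg_ex edges r i; pos_ex V r i])%N.
  apply: sum_ge => r /= Hr; apply: Hblock; apply/allP => lam Hl; apply/negP => Hc'.
  by move/negP: Hr; apply; apply/hasP; exists lam.
rewrite size_iota in Hcnt.
move: Hge HoT Hcnt Hc Hs H2.
set K := (2 ^ k)%N; set cu := count _ _; set cc := count _ _; set S := \sum_(r <- _) _.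
rewrite /eta -/K => Hge HoT Hcnt Hc Hs H2.
have Hcu : (K * (l + 1) + 1 <= cu)%N by lia.
have : (l.+1 * (K * (l + 1) + 1) <= l.+1 * cu)%N by rewrite leq_mul2l Hcu orbT.
nia.
Qed.
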